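(* Let $P$ be a well-ordered phaser and suppose $P\to^{*}Q$. Then $\neg(Q\prec P)$.
   Context: A view is a record $v=(\mathrm{sp}(v),\mathrm{wp}(v),\mathrm{mode}(v))$ with $\mathrm{sp}(v),\mathrm{wp}(v)\in\mathbb{N}$ and $\mathrm{mode}(v)\in\{\mathtt{SW},\mathtt{SO},\mathtt{WO}\}$. For a view or mode, $\mathrm{CanSignal}$ means the mode is $\mathtt{SW}$ or $\mathtt{SO}$, and $\mathrm{CanWait}$ means the mode is $\mathtt{SW}$ or $\mathtt{WO}$. A phaser $P$ is a finite partial map from task identifiers to views. For views, $v_1\prec v_2$ iff $\mathrm{CanSignal}(v_1)$, $\mathrm{sp}(v_1)<\mathrm{wp}(v_2)$ and $\mathrm{CanWait}(v_2)$; $v_1\unrhd v_2$ iff $\mathrm{mode}(v_1)=\mathtt{WO}$ or $\mathrm{sp}(v_1)\ge\mathrm{wp}(v_2)$ or $\mathrm{mode}(v_2)=\mathtt{SO}$. For phasers, $P\prec Q$ iff there exist $t\in\mathrm{dom}\,P$, $t'\in\mathrm{dom}\,Q$ with $P(t)\prec Q(t')$; $P\unrhd Q$ iff $P(t)\unrhd Q(t')$ for all $t\in\mathrm{dom}\,P$, $t'\in\mathrm{dom}\,Q$. $P$ is well-ordered iff $P\unrhd P$. Reduction $P\to_t^{o}Q$ is defined by four rules. Signal: if $P(t)=v$, $\mathrm{CanSignal}(v)$, and ($\mathrm{mode}(v)=\mathtt{SW}\Rightarrow\mathrm{wp}(v)=\mathrm{sp}(v)$), then $Q=P[t\mapsto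 v']$ with $v'$ equal to $v$ except $\mathrm{sp}(v')=\mathrm{sp}(v)+1$. Wait: if $P(t)=v$, $\mathrm{CanWait}(v)$, ($\mathrm{mode}(v)=\mathtt{SW}\Rightarrow\mathrm{wp}(v)+1=\mathrm{sp}(v)$), and $\mathrm{Sync}(P,t)$, meaning that every $t'\in\mathrm{dom}\,P$ with $\mathrm{CanSignal}(P(t'))$ has $\mathrm{sp}(P(t'))>\mathrm{wp}(v)$, then $Q=P[t\mapsto v']$ with $v'$ equal to $v$ except $\mathrm{wp}(v')=\mathrm{wp}(v)+1$. Register$(t',r)$: if $t'\notin\mathrm{dom}\,P$, $P(t)=v$, ($\mathrm{CanWait}(r)\Rightarrow\mathrm{CanWait}(v)$) and ($\mathrm{CanSignal}(r)\Rightarrow\mathrm{CanSignal}(v)$), then $Q=P[t'\mapsto(\mathrm{sp}(v),\mathrm{wp}(v),r)]$. Drop: if $t\in\mathrm{dom}\,P$, then $Q$ is $P$ with $t$ removed. $P\to Q$ means $P\to_t^{o}Q$ for some $t,o$, and $\to^{*}$ is the reflexive transitive closure of $\to$. *)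

(* Defs.v *)
From Stdlib Require Import Arith List Relations.

Definition tid := nat.

Inductive mode := SW | SO | WO.

Record view := mkView { sp : nat; wp : nat; vmode : mode }.

Definition CanSignalM (m : mode) : Prop := m = SW \/ m = SO.
Definition CanWaitM (m : mode) : Prop := m = SW \/ m = WO.
Definition CanSignal (v : view) : Prop := CanSignalM (vmode v).
Definition CanWait (v : view) : Prop := CanWaitM (vmode v).

Definition phaser := tid -> option view.

Definition finite_phaser (P : phaser) : Prop :=
  exists l : list tid, forall t, P t <> None -> In t l.

Definition view_prec (v1 v2 : view) : Prop :=
  CanSignal v1 /\ sp v1 < wp v2 /\ CanWait v2.

Definition view_ge (v1 v2 : view) : Prop :=
  vmode v1 = WO \/ sp v1 >= wp v2 \/ vmode v2 = SO.

Definition ph_prec (P Q : phaser) : Prop :=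
  exists t t' v v', P t = Some v /\ Q t' = Some v' /\ view_prec v v'.

Definition ph_ge (P Q : phaser) : Prop :=
  forall t t' v v', P t = Some v -> Q t' = Some v' -> view_ge v v'.

Definition well_ordered (P : phaser) : Prop := ph_ge P P.

Definition upd (P : phaser) (t : tid) (o : option view) : phaser :=
  fun t' => if Nat.eqb t' t then o else P t'.

Definition Sync (P : phaser) (t : tid) (v : view) : Prop :=
  forall t' v', P t' = Some v' -> CanSignal v' -> sp v' > wp v.

Inductive op := OSignal | OWait | ORegister (t' : tid) (r : mode) | ODrop.

Inductive reduce : phaser -> tid -> op -> phaser -> Prop :=
| R_signal : forall P t v,
    P t = Some v -> CanSignal v ->
    (vmode v = SW -> wp v = sp v) ->
    reduce P t OSignal (upd P t (Some (mkView (S (sp v)) (wp v) (vmode v))))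
| R_wait : forall P t v,
    P t = Some v -> CanWait v ->
    (vmode v = SW -> wp v + 1 = sp v) ->
    Sync P t v ->
    reduce P t OWait (upd P t (Some (mkView (sp v) (S (wp v)) (vmode v))))
| R_register : forall P t t' r v,
    P t' = None -> P t = Some v ->
    (CanWaitM r -> CanWait v) ->
    (CanSignalM r -> CanSignal v) ->
    reduce P t (ORegister t' r) (upd P t' (Some (mkView (sp v) (wp v) r)))
| R_drop : forall P t v,
    P t = Some v ->
    reduce P t ODrop (upd P t None).

Definition step (P Q : phaser) : Prop := exists t o, reduce P t o Q.

Definition steps : phaser -> phaser -> Prop := clos_refl_trans phaser step.

(* Main.v *)
Require Import Defs.
From Stdlib Require Import Arith List Relations Lia.

Definition Inv (P R : phaser) : Prop :=
  forall t t' w v, R t = Some w -> CanSignal w -> P t' = Some v -> CanWait v ->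
    sp w >= wp v.

Lemma inv_step (P R S : phaser) : step R S -> Inv P R -> Inv P S.
Proof.
  intros [t [o H]] I; unfold Inv in *.
  destruct H as [R t0 v0 H1 H2 H3|R t0 v0 H1 H2 H3 H4|R t0 t1 r v0 H1 H2 H3 H4|R t0 v0 H1];
  intros t t' w v Hw Hs Hv Hc; unfold upd in Hw.
  - destruct (Nat.eqb t t0); [|eapply I; eauto].
    inversion Hw; subst; simpl.
    assert (sp v0 >= wp v) by (eapply I; eauto). lia.
  - destruct (Nat.eqb t t0); [|eapply I; eauto].
    inversion Hw; subst; simpl. eapply (I t0 t' v0 v); eauto.
  - destruct (Nat.eqb t t1); [|eapply I; eauto].
    inversion Hw; subst; simpl. eapply (I t0 t' v0 v); eauto.
  - destruct (Nat.eqb t t0); [discriminate|eapply I; eauto].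
Qed.

Lemma inv_steps (P R S : phaser) : steps R S -> Inv P R -> Inv P S.
Proof.
  induction 1; auto. apply inv_step; auto.
Qed.

Theorem theorem3 (P Q : phaser) :
  finite_phaser P -> well_ordered P -> steps P Q -> ~ ph_prec Q P.
Proof.
  intros _ WO HS [t [t' [v [v' [H1 [H2 [H3 [H4 H5]]]]]]]].
  assert (I0 : Inv P P).
  { intros a b w u Hw Hs Hu Hc. destruct (WO a b w u Hw Hu) as [E|[E|E]].
    - destruct Hs as [F|F]; unfold CanSignal in *; congruence.
    - lia.
    - destruct Hc as [F|F]; unfold CanWait in *; congruence. }
  pose proof (inv_steps P P Q HS I0 t t' v v' H1 H3 H2 H5). lia.
Qed.
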